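(* Let $T$ be a PQ-tree with leaf set $E$, let $\vartriangleleft$ be a binary relation on $E$, and let $S$ be a subtree of $T$ with leaf set $E_S$. Suppose $T$ has a reordering compatible with $\vartriangleleft$. Let $S'$ be any reordering of $S$ (obtained by reordering operations applied only at inner nodes of $S$) such that for all $a,b\in E_S$, $a\vartriangleleft b$ implies $a<_{S'} b$. Then there exists a reordering $T'$ of $T$ compatible with $\vartriangleleft$ such that, for every inner node of $S$, the order of its children in $T'$ coincides with that in $S'$.
   Context: A PQ-tree on a finite set $E$ is a rooted tree whose leaves are in one-to-one correspondence with the elements of $E$, whose inner nodes are each either a P-node or a Q-node, each inner node has at least two children, and for each inner node a linear order of its children is fixed. $<_T$ denotes the linear ordering of $E$ obtained by reading the leaves of $T$ from left to right. The allowed reordering operations are: permuting the children of a P-node arbitrarily, and reversing the order of the children of a Q-node. A tree $T'$ is a reordering of $T$ if it is obtained from $T$ by finitely many such operations. A subtree consists of one inner node and all its descendants; it is itself a PQ-tree and $<_S$ is defined likewise. A reordering $T'$ is compatible with a relation $\vartriangleleft$ on $E$ if $a\vartriangleleft b$ implies $a<_{T'} b$ for all $a,b\in E$. *)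

(* Defs.v *)
From Stdlib Require Import List.
From Stdlib Require Import Permutation Relation_Operators.
From mathcomp Require Import all_boot.
Set Implicit Arguments. Unset Strict Implicit. Unset Printing Implicit Defensive.

Inductive pqtree (E : Type) : Type :=
| Leaf of E
| Pnode of seq (pqtree E)
| Qnode of seq (pqtree E).
Arguments Leaf {E}. Arguments Pnode {E}. Arguments Qnode {E}.

Section PQ.
Variable E : finType.

Fixpoint leaves (t : pqtree E) : seq E :=
  match t with
  | Leaf e => [:: e]
  | Pnode cs => flatten (map leaves cs)
  | Qnode cs => flatten (map leaves cs)
  end.

Fixpoint wf_inner (t : pqtree E) : bool :=
  match t with
  | Leaf _ => true
  | Pnode cs => (1 < size cs) && all wf_inner cs
  | Qnode cs => (1 < size cs) && all wf_inner cs
  end.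

Definition is_pqtree (t : pqtree E) : Prop :=
  wf_inner t /\ uniq (leaves t) /\ (forall e : E, e \in leaves t).

Definition is_inner (t : pqtree E) : bool :=
  if t is Leaf _ then false else true.

Definition ltT (t : pqtree E) (a b : E) : Prop :=
  index a (leaves t) < index b (leaves t).

Inductive reorder_step : pqtree E -> pqtree E -> Prop :=
| step_perm cs cs' : Permutation cs cs' -> reorder_step (Pnode cs) (Pnode cs')
| step_rev cs : reorder_step (Qnode cs) (Qnode (rev cs))
| step_inP l c c' r : reorder_step c c' ->
    reorder_step (Pnode (l ++ c :: r)) (Pnode (l ++ c' :: r))
| step_inQ l c c' r : reorder_step c c' ->
    reorder_step (Qnode (l ++ c :: r)) (Qnode (l ++ c' :: r)).

Definition reordering (t t' : pqtree E) : Prop :=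
  clos_refl_trans (pqtree E) reorder_step t t'.

Inductive occurs_in (s : pqtree E) : pqtree E -> Prop :=
| occ_here : occurs_in s s
| occ_P c cs : occurs_in s c -> List.In c cs -> occurs_in s (Pnode cs)
| occ_Q c cs : occurs_in s c -> List.In c cs -> occurs_in s (Qnode cs).

Definition subtree (s t : pqtree E) : Prop := is_inner s /\ occurs_in s t.

Definition compatible (rel : E -> E -> Prop) (t : pqtree E) : Prop :=
  forall a b : E, rel a b -> ltT t a b.

End PQ.

(* Main.v *)
Require Import Defs.
From mathcomp Require Import all_boot.
From Stdlib Require List.
From Stdlib Require Import Permutation Relation_Operators.
From mathcomp Require Import zify.
Set Implicit Arguments. Unset Strict Implicit.

Lemma idx_swap (T : eqType) (P L L' Q : seq T) (a b : T) :
  uniq (P ++ L ++ Q) -> perm_eq L L' ->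
  (a \in L -> b \in L -> index a L' < index b L') ->
  index a (P ++ L ++ Q) < index b (P ++ L ++ Q) ->
  index a (P ++ L' ++ Q) < index b (P ++ L' ++ Q).
Proof.
move=> U pL HL.
have mL := perm_mem pL; have sL := perm_size pL.
rewrite !index_cat -!mL -!sL.
move: U; rewrite cat_uniq => /and3P [_ /hasPn dPL _].
have nPL x : x \in P -> x \notin L.
  move=> xP; apply/negP=> xL; have := dPL x; rewrite mem_cat xL => /(_ isT).
  by rewrite xP.
have ia := index_mem a P; have ib := index_mem b P.
have ia' := index_mem a L; have ib' := index_mem b L.
have ja' := index_mem a L'; have jb' := index_mem b L'.
rewrite -sL -!mL in ja' jb'.
case aP: (a \in P); case bP: (b \in P); rewrite ?aP ?bP in ia ib;
  case aL: (a \in L); case bL: (b \in L); rewrite ?aL ?bL in ia' ib' ja' jb' => //=;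
  try (by move: (nPL _ aP); rewrite aL);
  try (by move: (nPL _ bP); rewrite bL); try lia.
Qed.

Section Aux.
Variable E : finType.
Implicit Types t s : pqtree E.

Lemma In_rev_seq (A : Type) (x : A) (l : seq A) : List.In x l -> List.In x (rev l).
Proof.
elim: l => [//|a l IH] /= [->|H]; rewrite rev_cons -cats1; apply List.in_or_app.
- by right; left.
- by left; apply IH.
Qed.

Lemma step_sym t t' : reorder_step t t' -> reorder_step t' t.
Proof.
elim=> {t t'}.
- by move=> cs cs' H; apply step_perm; apply Permutation_sym.
- by move=> cs; have := step_rev (rev cs); rewrite revK.
- by move=> l c c' r _ H; apply step_inP.
- by move=> l c c' r _ H; apply step_inQ.
Qed.

Lemma reord_sym t t' : reordering t t' -> reordering t' t.
Proof.
elim=> {t t'}.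
- by move=> x y H; apply rt_step; apply step_sym.
- by move=> x; apply rt_refl.
- by move=> x y z _ H1 _ H2; apply: rt_trans H2 H1.
Qed.

Lemma perm_flat (cs cs' : seq (pqtree E)) : Permutation cs cs' ->
  perm_eq (flatten (map (@leaves E) cs)) (flatten (map (@leaves E) cs')).
Proof.
elim=> {cs cs'} /=.
- by [].
- by move=> x l l' _ H; rewrite perm_cat2l.
- move=> x y l; rewrite !catA perm_cat2r; apply/permPl; exact: perm_catC.
- by move=> l l' l'' _ H1 _ H2; exact: (seq.perm_trans H1 H2).
Qed.

Lemma perm_flat_rev (ss : seq (seq E)) : perm_eq (flatten (rev ss)) (flatten ss).
Proof.
elim: ss => [//|s ss IH]; rewrite rev_cons flatten_rcons /=.
by rewrite perm_catC perm_cat2l.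
Qed.

Lemma step_leaves t t' : reorder_step t t' -> perm_eq (leaves t) (leaves t').
Proof.
elim=> {t t'} /=.
- by move=> cs cs' H; apply perm_flat.
- by move=> cs; rewrite map_rev perm_sym perm_flat_rev.
- by move=> l c c' r _ H; rewrite !map_cat !flatten_cat /= perm_cat2l perm_cat2r.
- by move=> l c c' r _ H; rewrite !map_cat !flatten_cat /= perm_cat2l perm_cat2r.
Qed.

Lemma reord_leaves t t' : reordering t t' -> perm_eq (leaves t) (leaves t').
Proof.
elim=> {t t'}.
- by move=> x y H; apply step_leaves.
- by move=> x.
- by move=> x y z _ H1 _ H2; exact: (seq.perm_trans H1 H2).
Qed.

Lemma occ_step s t t1 : occurs_in s t -> reorder_step t t1 ->
  exists s1, reordering s s1 /\ occurs_in s1 t1.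
Proof.
move=> H; elim: H t1 => {t}.
- by move=> t1 st; exists t1; split; [apply rt_step | apply occ_here].
- move=> c cs occ IH inc t1 st; inversion st; subst.
  + by exists s; split; [apply rt_refl | apply: occ_P occ _; apply: Permutation_in inc].
  + case: (List.in_app_or _ _ _ inc) => [inl|[ec|inr]].
    * exists s; split; [apply rt_refl|apply: occ_P occ _].
      by apply List.in_or_app; left.
    * subst; have [s1 [r1 o1]] := IH _ H0.
      by exists s1; split=> //; apply: occ_P o1 _; apply List.in_or_app; right; left.
      exists s; split; [apply rt_refl|apply: occ_P occ _].
      by apply List.in_or_app; right; right.
- move=> c cs occ IH inc t1 st; inversion st; subst.
  + by exists s; split; [apply rt_refl | apply: occ_Q occ _; apply In_rev_seq].
  + case: (List.in_app_or _ _ _ inc) => [inl|[ec|inr]].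
    * exists s; split; [apply rt_refl|apply: occ_Q occ _].
      by apply List.in_or_app; left.
    * subst; have [s1 [r1 o1]] := IH _ H0.
      by exists s1; split=> //; apply: occ_Q o1 _; apply List.in_or_app; right; left.
    * exists s; split; [apply rt_refl|apply: occ_Q occ _].
      by apply List.in_or_app; right; right.
Qed.

Lemma occ_reord t t0 : reordering t t0 -> forall s, occurs_in s t ->
  exists s0, reordering s s0 /\ occurs_in s0 t0.
Proof.
elim=> {t t0}.
- by move=> x y H s o; apply: occ_step o H.
- by move=> x s o; exists s; split; [apply rt_refl|].
- move=> x y z _ H1 _ H2 s o.
  have [s1 [r1 o1]] := H1 _ o; have [s2 [r2 o2]] := H2 _ o1.
  by exists s2; split=> //; apply: rt_trans r1 r2.
Qed.

Lemma lift_reord (g : pqtree E -> pqtree E) :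
  (forall x y, reorder_step x y -> reorder_step (g x) (g y)) ->
  forall x y, reordering x y -> reordering (g x) (g y).
Proof.
move=> Hg x y; elim=> {x y}.
- by move=> x y H; apply rt_step; apply Hg.
- by move=> x; apply rt_refl.
- by move=> x y z _ H1 _ H2; apply: rt_trans H1 H2.
Qed.

Lemma occ_ctx s t : occurs_in s t -> exists f : pqtree E -> pqtree E,
  [/\ f s = t, (forall x y, reordering x y -> reordering (f x) (f y)),
      (forall x, occurs_in x (f x)) &
      exists P Q, forall x, leaves (f x) = P ++ leaves x ++ Q].
Proof.
elim=> {t}.
- exists id; split=> //; first by move=> x; apply occ_here.
  by exists [::], [::] => x; rewrite cats0.
- move=> c cs _ [f [fs fr fo [P [Q fl]]]] inc.
  have [l [r ecs]] := List.in_split _ _ inc.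
  exists (fun x => Pnode (l ++ f x :: r)); split.
  + by rewrite fs ecs.
  + move=> x y rxy; apply: (@lift_reord (fun z => Pnode (l ++ z :: r))) (fr _ _ rxy).
    by move=> a b st; apply step_inP.
  + by move=> x; apply: (occ_P (fo x)); apply List.in_or_app; right; left.
  + exists (flatten (map (@leaves E) l) ++ P), (Q ++ flatten (map (@leaves E) r)) => x /=.
    by rewrite map_cat flatten_cat /= fl !catA.
- move=> c cs _ [f [fs fr fo [P [Q fl]]]] inc.
  have [l [r ecs]] := List.in_split _ _ inc.
  exists (fun x => Qnode (l ++ f x :: r)); split.
  + by rewrite fs ecs.
  + move=> x y rxy; apply: (@lift_reord (fun z => Qnode (l ++ z :: r))) (fr _ _ rxy).
    by move=> a b st; apply step_inQ.
  + by move=> x; apply: (occ_Q (fo x)); apply List.in_or_app; right; left.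
  + exists (flatten (map (@leaves E) l) ++ P), (Q ++ flatten (map (@leaves E) r)) => x /=.
    by rewrite map_cat flatten_cat /= fl !catA.
Qed.



End Aux.

Theorem mainTheorem2 (E : finType) (rel : E -> E -> Prop) (T S S' : pqtree E) :
  is_pqtree T ->
  subtree S T ->
  (exists T0, reordering T T0 /\ compatible rel T0) ->
  reordering S S' ->
  (forall a b : E, a \in leaves S -> b \in leaves S -> rel a b -> ltT S' a b) ->
  exists T', [/\ reordering T T', compatible rel T' & occurs_in S' T'].
Proof.
move=> [_ [uT _]] [_ oS] [T0 [rT0 cT0]] rS HS.
have [S0 [rS0 oS0]] := occ_reord rT0 oS.
have [f [fS0 fr fo [P [Q fl]]]] := occ_ctx oS0.
have rS0S' : reordering S0 S' by apply: rt_trans (reord_sym rS0) rS.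
exists (f S'); split.
- by apply: rt_trans rT0 _; rewrite -fS0; apply fr.
- move=> a b rab; rewrite /ltT fl.
  have := cT0 a b rab; rewrite /ltT -fS0 fl => h.
  apply: idx_swap h.
  + by rewrite -fl fS0 (perm_uniq (reord_leaves rT0)) in uT *.
  + exact: reord_leaves rS0S'.
  + move=> aL bL; apply HS => //.
    * by rewrite (perm_mem (reord_leaves rS0)).
    * by rewrite (perm_mem (reord_leaves rS0)).
- exact: fo.
Qed.
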